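(* Let $\alpha_1,\dots,\alpha_r\in\mathbb{T}\setminus\{0\}$, $D=\{\alpha_1,\dots,\alpha_r\}$, $\alpha=(\alpha_1,\dots,\alpha_r)\in\mathbb{T}^r$. Then $$\mathrm{Md}_{\mathbb{T}}(D)\ \ge\ \kappa_{\mathbb{T}}(D):=\max\Big\{\min_{i\in[r]}\|\beta_i\|:\ \beta=(\beta_1,\dots,\beta_r)\in\overline{\mathbb{Z}\alpha}\Big\},$$ where $\overline{\mathbb{Z}\alpha}$ is the closure in $\mathbb{T}^r$ of $\{N\alpha: N\in\mathbb{Z}\}$.
   Context: $\mathbb{T}=\mathbb{R}/\mathbb{Z}$ with Haar probability measure $\mu$; $\|x\|$ is the distance to the nearest integer. $\mathrm{Md}_{\mathbb{T}}(D)=\sup\{\mu(A): A\subset\mathbb{T}\text{ Borel},\ (A-A)\cap D=\emptyset\}$. *)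

(* Defs.v *)
(* T = R/Z modelled by representatives in R : realType. *)
From mathcomp Require Import all_boot all_order all_algebra.
From mathcomp Require Import all_classical all_reals all_analysis.
Set Implicit Arguments. Unset Strict Implicit. Unset Printing Implicit Defensive.
Import Order.TTheory GRing.Theory Num.Theory.
Local Open Scope classical_set_scope.
Local Open Scope ring_scope.

Definition tnorm {R : realType} (x : R) : R :=
  Num.min (x - (Num.floor x)%:~R) ((Num.ceil x)%:~R - x).

Definition tzero {R : realType} (x : R) : Prop := exists k : int, x = k%:~R.

(* Borel subsets of T are identified with Borel subsets of [0,1);
   Haar probability measure = Lebesgue measure on [0,1).
   A is admissible iff (A - A) ∩ D = ∅ in T, D = {alpha i}. *)
Definition Md_admissible {R : realType} (r : nat) (alpha : 'I_r -> R)
  (A : set R) : Prop :=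
  measurable A /\ A `<=` [set x : R | 0 <= x < 1] /\
  forall x y, A x -> A y -> forall i : 'I_r, ~ tzero (x - y - alpha i).

Definition Md_T {R : realType} (r : nat) (alpha : 'I_r -> R) : \bar R :=
  ereal_sup [set (@lebesgue_measure R A) | A in Md_admissible alpha].

Definition in_closure_Zalpha {R : realType} (r : nat) (alpha beta : 'I_r -> R)
  : Prop :=
  forall e : R, 0 < e -> exists N : int,
    forall i : 'I_r, tnorm (beta i - N%:~R * alpha i) < e.

(* kappa_T(D) (defined as a sup; the max is attained by compactness) *)
Definition kappa_T {R : realType} (r : nat) (alpha : 'I_r -> R) : \bar R :=
  ereal_sup [set ((\big[Num.min/1]_(i < r) tnorm (beta i))%:E) |
             beta in in_closure_Zalpha alpha].

(* Main.v *)
Require Import Defs.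
From mathcomp Require Import all_boot all_order all_algebra.
From mathcomp Require Import all_classical all_reals all_analysis.
From mathcomp Require Import ring lra zify.
Import Order.TTheory GRing.Theory Num.Theory.
Local Open Scope classical_set_scope.
Local Open Scope ring_scope.


Lemma ceil_le_floorD1 {R : realType} (x : R) : Num.ceil x <= Num.floor x + 1.
Proof. rewrite ceil_floor lerD2l; by case: (x \isn't a Num.int). Qed.

Lemma tnorm_le {R : realType} (x : R) (k : int) : tnorm x <= `|x - k%:~R|.
Proof.
rewrite /tnorm.
have /andP[h1 h2] := floor_itv x.
have hc := ceil_le_floorD1 x.
case: (lerP k (Num.floor x)) => hk.
- have hk' : (k%:~R : R) <= (Num.floor x)%:~R by rewrite ler_int.
  rewrite ger0_norm ?subr_ge0; last by apply: le_trans h1.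
  rewrite ge_min; apply/orP; left; lra.
- have hk1 : Num.ceil x <= k by lia.
  have hk' : ((Num.ceil x)%:~R : R) <= k%:~R by rewrite ler_int.
  have hk2 : ((Num.floor x + 1)%:~R : R) <= k%:~R by rewrite ler_int; lia.
  rewrite ler0_norm ?subr_le0; last by lra.
  rewrite ge_min; apply/orP; right; lra.
Qed.

Lemma tnorm_ex {R : realType} (x : R) : exists k : int, tnorm x = `|x - k%:~R|.
Proof.
rewrite /tnorm.
have /andP[h1 h2] := floor_itv x.
have h3 := Num.Theory.ceil_ge x.
rewrite /Num.min /Order.min; case: ifP => h.
- exists (Num.floor x); rewrite ger0_norm //; lra.
- exists (Num.ceil x); rewrite ler0_norm; lra.
Qed.

Lemma tnorm_tri {R : realType} (a b : R) : tnorm (a + b) <= tnorm a + tnorm b.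
Proof.
have [k hk] := tnorm_ex a; have [l hl] := tnorm_ex b.
rewrite hk hl; apply: le_trans (tnorm_le _ (k + l)) _.
rewrite intrD; apply: le_trans (ler_normD _ _); rewrite le_eqVlt; apply/orP; left; apply/eqP; congr (`|_|); ring.
Qed.


Definition Iv {R:realType} (M : nat) (c : R) (k : nat) : set R :=
  [set` Interval (BLeft (k%:R / M%:R)) (BLeft ((k%:R + c) / M%:R))].
Definition Au {R : realType} (M : nat) (c : R) (n : nat) : set R :=
  \big[setU/set0]_(k < n) Iv M c k.

Lemma Au_mem {R : realType} M (c : R) n x : Au M c n x -> exists k, (k < n)%N /\ Iv M c k x.
Proof.
elim: n => [|n IH]; first by rewrite /Au big_ord0.
rewrite /Au big_ord_recr /= => -[/IH [k [hk hx]]|hx].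
- by exists k; split => //; lia.
- by exists n.
Qed.

Lemma Au_meas {R : realType} M (c : R) n : measurable (Au M c n).
Proof.
elim: n => [|n IH]; first by rewrite /Au big_ord0.
rewrite /Au big_ord_recr /=; apply: measurableU => //; exact: measurable_itv.
Qed.

Lemma Iv_mem {R : realType} M (c : R) k x : (0 < M)%N -> Iv M c k x ->
  k%:R <= M%:R * x < k%:R + c.
Proof.
move=> hM; rewrite /Iv /= in_itv /= => /andP[h1 h2].
have hM' : (0 < M%:R :> R)%R by rewrite ltr0n.
by rewrite mulrC -ler_pdivrMr // -ltr_pdivlMr // h1 h2.
Qed.
Arguments Iv_mem {R M c k x}.

Lemma Au_lt {R : realType} M (c : R) n x : (0 < M)%N -> c <= 1 -> Au M c n x ->
  M%:R * x < n%:R.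
Proof.
move=> hM hc /Au_mem [k [hk /(Iv_mem hM) /andP[_ h]]].
have : (k.+1%:R : R) <= n%:R by rewrite ler_nat.
rewrite -addn1 natrD; lra.
Qed.
Arguments Au_lt {R M c n x}.

Lemma Au_measure {R : realType} M (c : R) n : (0 < M)%N -> 0 < c -> c <= 1 ->
  lebesgue_measure (Au M c n) = (n%:R * c / M%:R)%:E.
Proof.
move=> hM hc0 hc1.
have hM' : (0 < M%:R :> R)%R by rewrite ltr0n.
elim: n => [|n IH]; first by rewrite /Au big_ord0 measure0 mul0r mul0r.
rewrite /Au big_ord_recr /= measureU; last 3 first.
- exact: Au_meas.
- exact: measurable_itv.
- apply/seteqP; split => x //= [hx hy].
  have := Au_lt hM hc1 hx.
  have := Iv_mem hM hy.
  move=> /andP[h1 _]; lra.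
change (lebesgue_measure (Au M c n) + lebesgue_measure (Iv M c n) = (n.+1%:R * c / M%:R)%:E)%E.
rewrite IH /Iv lebesgue_measure_itv /= lte_fin.
have -> : n%:R / M%:R < (n%:R + c) / M%:R.
  by rewrite ltr_pM2r ?invr_gt0 // ltrDl.
rewrite -!EFinD; congr (_%:E).
rewrite -addn1 natrD; field; lra.
Qed.

Lemma tnorm_lt1 {R : realType} (x : R) : tnorm x < 1.
Proof.
have /andP[h1 h2] := floor_itv x.
apply: le_lt_trans (tnorm_le x (Num.floor x)) _.
rewrite ger0_norm; rewrite intrD in h2; lra.
Qed.

Lemma intrn {R : realType} (n : nat) : (n%:Z)%:~R = n%:R :> R.
Proof. by []. Qed.

Lemma norm_eq_le {R : realType} (a b c : R) : a = b -> `|b| <= c -> `|a| <= c.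
Proof. by move=> ->. Qed.

Local Open Scope ereal_scope.

Theorem mainTheorem13 (R : realType) (r : nat) (alpha : 'I_r -> R)
  (hr : (0 < r)%N) (halpha : forall i : 'I_r, ~ tzero (alpha i)) :
  kappa_T alpha <= Md_T alpha.
Proof.
have Md0 : 0 <= Md_T alpha.
  apply: ereal_sup_ubound; exists set0; last exact: measure0.
  split; first exact: measurable0.
  by split.
apply/ereal_supP => _ [beta hb <-].
set d := \big[Num.min/1%R]_(i < r) tnorm (beta i).
have hd : forall i, (d <= tnorm (beta i))%R by move=> i; exact: bigmin_le.
apply/lee_subgt0Pr => e he.
have [N hN] := hb e he.
rewrite -EFinB.
set c := (d - e)%R.
case: (lerP c 0) => hc0.
  by apply: le_trans Md0; rewrite lee_fin.
have hNa : forall i, (c < tnorm (N%:~R * alpha i))%R.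
  move=> i; have := tnorm_tri (beta i - N%:~R * alpha i) (N%:~R * alpha i).
  rewrite subrK; have := hN i; have := hd i; rewrite /c; lra.
pose i0 : 'I_r := Ordinal hr.
have hc1 : (c <= 1)%R.
  have := tnorm_lt1 (beta i0); have := hd i0; rewrite /c; lra.
have [M [s [hM [hs hNs]]]] : exists (M : nat) (s : int),
    (0 < M)%N /\ (s = 1 \/ s = -1)%R /\ N = (s * M%:Z)%R.
  case: N hNa {hN} => n hNa.
  - exists n, 1%R; split; last by split; [left|rewrite mul1r].
    case: n hNa => // hNa; have := hNa i0; rewrite mul0r.
    have := tnorm_le (0%R : R) 0; rewrite subr0 normr0; lra.
  - exists n.+1, (-1)%R; split => //; split; first by right.
    by rewrite NegzE mulN1r.
have hM' : (0 < M%:R :> R)%R by rewrite ltr0n.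
apply: ereal_sup_ubound; exists (Au M c M); last first.
  rewrite Au_measure //; congr (_%:E); rewrite mulrC mulrA mulVf ?mul1r //; exact: lt0r_neq0.
split; first exact: Au_meas.
split.
  move=> x /Au_mem [k [hk hx]]; have /andP[h1 h2] := Iv_mem hM hx.
  have hk1 : (k.+1%:R <= M%:R :> R)%R by rewrite ler_nat.
  rewrite -addn1 natrD in hk1.
  have h0 : (0 <= k%:R :> R)%R by rewrite ler0n.
  rewrite /= -(pmulr_rge0 _ hM') -(ltr_pM2l hM') mulr1.
  apply/andP; split; lra.
move=> x y /Au_mem [k [hk hx]] /Au_mem [l [hl hy]] i [z hz].
have /andP[hx1 hx2] := Iv_mem hM hx.
have /andP[hy1 hy2] := Iv_mem hM hy.
have := hNa i; apply/negP; rewrite -leNgt.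
have ha : alpha i = (x - y - z%:~R)%R by lra.
apply: le_trans (tnorm_le _ (s * (k%:Z - l%:Z - M%:Z * z))%R) _.
rewrite ha hNs.
case: hs => ->.
- apply: (@norm_eq_le _ _ ((M%:R * x - k%:R) - (M%:R * y - l%:R))%R).
    rewrite !(intrM, intrB, intrD, intrN, intrn). ring.
  rewrite ler_norml; apply/andP; split; lra.
- apply: (@norm_eq_le _ _ ((M%:R * y - l%:R) - (M%:R * x - k%:R))%R).
    rewrite !(intrM, intrB, intrD, intrN, intrn). ring.
  rewrite ler_norml; apply/andP; split; lra.
Qed.
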